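(* Let $(\mathcal A,\mathcal T,(-))$ be a meta-tangible $\mathcal T$-monoid module triple with identity $\mathbb 1\in\mathcal T$, and put $e=\mathbb 1(-)\mathbb 1$, $e'=e+\mathbb 1$, $\mathbf 3=\mathbb 1+\mathbb 1+\mathbb 1$. Then exactly one of the following holds: (i) $e'\in\mathcal T$, and then $e'=\mathbb 1$; (ii) $e'\in\mathcal T^\circ$, and then $e'=e$; (iii) $e'\notin\mathcal T\cup\mathcal T^\circ$, and then $(-)\mathbb 1=\mathbb 1$ and $e'=\mathbf 3$.
   Context: $(\mathcal A,+,\mathbb 0)$ commutative monoid, $\mathcal T\subseteq\mathcal A\setminus\{\mathbb 0\}$. A negation map is $(-):\mathcal A\to\mathcal A$ with $(-)(b_1+b_2)=(-)b_1+(-)b_2$, $(-)((-)b)=b$, $(-)\mathbb 0=\mathbb 0$, $(-)\mathcal T\subseteq\mathcal T$. Write $b(-)c:=b+((-)c)$, $b^\circ:=b(-)b$, $\mathcal A^\circ=\{b^\circ:b\in\mathcal A\}$, $\mathcal T^\circ=\{a^\circ:a\in\mathcal T\}$. A $\mathcal T$-triple $(\mathcal A,\mathcal T,(-))$: such data with an action $\mathcal T\times\mathcal A\to\mathcal A$ satisfying $a(b_1+b_2)=ab_1+ab_2$, $a\mathbb 0=\mathbb 0$, $(-)(ab)=((-)a)b=a((-)b)$, with $\mathcal T\cap\mathcal A^\circ=\emptyset$ and every element of $\mathcal A$ a finite sum of elements of $\mathcal T$. It is a $\mathcal T$-monoid module triple if moreover $\mathcal T$ is a monoid with identity $\mathbb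 1$ whose multiplication is the restriction of the action, $\mathbb 1b=b$ and $(a_1a_2)b=a_1(a_2b)$. The triple is meta-tangible if $a+b\in\mathcal T$ for all $a,b\in\mathcal T$ with $b\neq(-)a$. *)

(* Defs.v *)
From Stdlib Require Import List.
Import ListNotations.

(* The set T is a predicate on A; the
   action T x A -> A is given by a total function [act : A -> A -> A] whose
   axioms are only imposed when the first argument lies in T. *)
Record TMonoidModuleTriple := {
  car :> Type;
  add : car -> car -> car;
  zero : car;
  tang : car -> Prop;
  neg : car -> car;
  act : car -> car -> car;
  one : car;
  addA : forall x y z, add x (add y z) = add (add x y) z;
  addC : forall x y, add x y = add y x;
  add0 : forall x, add zero x = x;
  tang_nz : forall a, tang a -> a <> zero;
  negD : forall b1 b2, neg (add b1 b2) = add (neg b1) (neg b2);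
  negK : forall b, neg (neg b) = b;
  neg0 : neg zero = zero;
  neg_tang : forall a, tang a -> tang (neg a);
  actD : forall a b1 b2, tang a -> act a (add b1 b2) = add (act a b1) (act a b2);
  act0 : forall a, tang a -> act a zero = zero;
  act_negl : forall a b, tang a -> neg (act a b) = act (neg a) b;
  act_negr : forall a b, tang a -> neg (act a b) = act a (neg b);
  tang_not_circ : forall a b, tang a -> a <> add b (neg b);
  tang_span : forall b, exists l : list car,
      Forall tang l /\ b = fold_right add zero l;
  (* T is a monoid with identity 1 whose multiplication is the action *)
  tang_one : tang one;
  tang_mul : forall a1 a2, tang a1 -> tang a2 -> tang (act a1 a2);
  act1 : forall b, act one b = b;
  mul1r : forall a, tang a -> act a one = a;
  actA : forall a1 a2 b, tang a1 -> tang a2 -> act (act a1 a2) b = act a1 (act a2 b)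
}.

Definition sub {A : TMonoidModuleTriple} (b c : A) : A := add A b (neg A c).
Definition circ {A : TMonoidModuleTriple} (b : A) : A := sub b b.
Definition in_tang_circ {A : TMonoidModuleTriple} (x : A) : Prop :=
  exists a, tang A a /\ x = circ a.

Definition meta_tangible (A : TMonoidModuleTriple) : Prop :=
  forall a b : A, tang A a -> tang A b -> b <> neg A a -> tang A (add A a b).

(* Main.v *)
Require Import Defs.
From Stdlib Require Import Classical.

Theorem proposition7p2 (A : TMonoidModuleTriple) (hmt : meta_tangible A) :
  let e := circ (one A) in
  let e' := add A e (one A) in
  let three := add A (add A (one A) (one A)) (one A) in
  ~ (tang A e' /\ in_tang_circ e') /\
  ((tang A e' /\ e' = one A) \/
   (in_tang_circ e' /\ e' = e) \/
   (~ tang A e' /\ ~ in_tang_circ e' /\ neg A (one A) = one A /\ e' = three)).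
Proof.
  intros e e' three.
  assert (T1 := tang_one A).
  split.
  { intros [Ht [a [Ha Hc]]]. exact (tang_not_circ A e' a Ht Hc). }
  unfold e', e, circ, sub in *.
  set (u := one A) in *. set (m := neg A u) in *.
  assert (Tm : tang A m) by (apply neg_tang; exact T1).
  destruct (classic (m = u)) as [hm | hm].
  -
    rewrite hm.
    destruct (classic (tang A (add A (add A u u) u))) as [Ht | Ht].
    + left. split; [exact Ht|].
      set (t3 := add A (add A u u) u) in *.
      destruct (classic (u = neg A t3)) as [H1 | H1].
      * rewrite <- (negK A t3), <- H1. exact hm.
      * exfalso. assert (Ht4 := hmt t3 u Ht T1 H1).
        apply (tang_not_circ A _ (add A u u) Ht4).
        unfold t3. rewrite negD. fold m. rewrite hm. rewrite !addA. reflexivity.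
    + destruct (classic (in_tang_circ (add A (add A u u) u))) as [Hc | Hc].
      * right; left. split; [exact Hc|].
        destruct Hc as [a [Ta Hea]]. unfold circ, sub in Hea.
        assert (Hna : neg A a = a).
        { transitivity (neg A (act A a u)); [rewrite (mul1r A a Ta : act A a u = a); reflexivity|].
          rewrite (act_negr A a u Ta). fold m. rewrite hm.
          apply mul1r; exact Ta. }
        rewrite Hna in Hea.
        destruct (classic (a = u)) as [Hau | Hau].
        { rewrite Hea, Hau. reflexivity. }
        exfalso.
        assert (Tc : tang A (add A u a)).
        { apply hmt; auto. fold m. rewrite hm. exact Hau. }
        destruct (classic (a = neg A (add A u a))) as [Hac | Hac].
        -- rewrite negD in Hac. fold m in Hac. rewrite hm, Hna in Hac.
           (* Hac : a = u + a *)
           set (y := act A a a).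
           assert (Hny : neg A y = y).
           { unfold y. rewrite (act_negr A a a Ta), Hna. reflexivity. }
           assert (Hy : act A a (add A a a) = add A y y).
           { apply actD; exact Ta. }
           rewrite <- Hea in Hy.
           rewrite !(actD A a _ _ Ta), (mul1r A a Ta : act A a u = a) in Hy.
           assert (Haa : add A (add A a a) a = a).
           { rewrite <- Hea. rewrite <- !addA. rewrite <- Hac, <- Hac, <- Hac. reflexivity. }
           rewrite Haa in Hy.
           apply (tang_not_circ A a y Ta). rewrite Hny. exact Hy.
        -- assert (T4 := hmt (add A u a) a Tc Ta Hac).
           apply (tang_not_circ A _ (add A u u) T4).
           rewrite negD. fold m. rewrite hm.
           rewrite <- (addA A u a a), <- Hea. rewrite !addA. reflexivity.
      * right; right. repeat split; auto.
  -
    assert (Tt : tang A (add A u u)).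
    { apply hmt; auto. }
    assert (He : add A (add A u m) u = add A (add A u u) m).
    { rewrite (addC A (add A u m)), addA. reflexivity. }
    rewrite He.
    destruct (classic (m = add A m m)) as [Hmm | Hmm].
    + assert (H11 : u = add A u u).
      { rewrite <- (negK A u). fold m. rewrite Hmm at 1. rewrite negD. unfold m. rewrite negK. reflexivity. }
      right; left. rewrite <- H11. split; [|reflexivity].
      exists u. split; [exact T1|]. reflexivity.
    + assert (Te : tang A (add A (add A u u) m)).
      { apply hmt; auto. rewrite negD. exact Hmm. }
      left. split; [exact Te|].
      destruct (classic (m = neg A (add A (add A u u) m))) as [H1 | H1].
      * rewrite <- (negK A (add A (add A u u) m)), <- H1. unfold m. apply negK.
      * exfalso. assert (T4 := hmt _ m Te Tm H1).
        apply (tang_not_circ A _ (add A u u) T4).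
        rewrite negD. fold m. rewrite <- addA. reflexivity.
Qed.
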